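(* Let $(X,d)$ be a compact metric space with the $E_{1,0}$-property. Then the intrinsic distance $d_I:X\times X\to\mathbb{R}$ is well defined (finite-valued) and continuous.
   Context: $(X,d)$ has the $E_{1,0}$-property if for every nonempty open $\Omega\subsetneq X$ there is a continuous $u:\overline\Omega\to\mathbb{R}$ with $s[u](x)=1$ for all $x\in\Omega$ and $u=0$ on $\partial\Omega$, where the local slope is $s[u](\bar x):=\limsup_{x\to\bar x}\frac{\max\{u(\bar x)-u(x),0\}}{d(\bar x,x)}$ (zero if $\bar x$ isolated), computed in $\overline\Omega$. The intrinsic distance $d_I(x,y)$ is the infimum of lengths of continuous curves joining $x$ and $y$ (length $=\sup\sum_i d(\gamma(t_i),\gamma(t_{i+1}))$ over partitions), with $\inf\emptyset=+\infty$. *)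

(* Defs.v *)
From Stdlib Require Import Reals Lra ClassicalEpsilon List.
From Coquelicot Require Import Coquelicot.
Open Scope R_scope.

Section Metric.
Variable X : Type.
Variable d : X -> X -> R.

Definition is_metric : Prop :=
  (forall x y, 0 <= d x y) /\ (forall x y, d x y = 0 <-> x = y) /\
  (forall x y, d x y = d y x) /\ (forall x y z, d x z <= d x y + d y z).

Definition mopen (U : X -> Prop) : Prop :=
  forall x, U x -> exists r, 0 < r /\ forall y, d x y < r -> U y.

Definition mcompact : Prop :=
  forall (I : Type) (U : I -> X -> Prop),
    (forall i, mopen (U i)) -> (forall x, exists i, U i x) ->
    exists l : list I, forall x, exists i, In i l /\ U i x.

Definition closure (A : X -> Prop) (x : X) : Prop :=
  forall r, 0 < r -> exists y, A y /\ d x y < r.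

Definition interior (A : X -> Prop) (x : X) : Prop :=
  exists r, 0 < r /\ forall y, d x y < r -> A y.

Definition boundary (A : X -> Prop) (x : X) : Prop :=
  closure A x /\ ~ interior A x.

Definition continuous_on (A : X -> Prop) (u : X -> R) : Prop :=
  forall x, A x -> forall eps, 0 < eps -> exists delta, 0 < delta /\
    forall y, A y -> d x y < delta -> Rabs (u y - u x) < eps.

Definition isolated_in (A : X -> Prop) (x : X) : Prop :=
  exists r, 0 < r /\ forall y, A y -> ~ (0 < d x y < r).

Definition slope_sup (A : X -> Prop) (u : X -> R) (xb : X) (r : R) : Rbar :=
  Lub_Rbar (fun v => exists x, A x /\ 0 < d xb x < r /\
                       v = Rmax (u xb - u x) 0 / d xb x).

Definition local_slope (A : X -> Prop) (u : X -> R) (xb : X) : Rbar :=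
  if excluded_middle_informative (isolated_in A xb) then Finite 0
  else Rbar_glb (fun v => exists r, 0 < r /\ v = slope_sup A u xb r).

Definition E10_property : Prop :=
  forall Omega : X -> Prop,
    mopen Omega -> (exists x, Omega x) -> (exists x, ~ Omega x) ->
    exists u : X -> R,
      continuous_on (closure Omega) u /\
      (forall x, Omega x -> local_slope (closure Omega) u x = Finite 1) /\
      (forall x, boundary Omega x -> u x = 0).

Definition curve_continuous (a b : R) (g : R -> X) : Prop :=
  forall t, a <= t <= b -> forall eps, 0 < eps -> exists delta, 0 < delta /\
    forall s, a <= s <= b -> Rabs (s - t) < delta -> d (g t) (g s) < eps.

Fixpoint psum (g : R -> X) (t : nat -> R) (n : nat) : R :=
  match n with
  | O => 0
  | S k => psum g t k + d (g (t k)) (g (t (S k)))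
  end.

Definition partition (a b : R) (t : nat -> R) (n : nat) : Prop :=
  t O = a /\ t n = b /\ forall i, (i < n)%nat -> t i <= t (S i).

Definition curve_length (a b : R) (g : R -> X) : Rbar :=
  Lub_Rbar (fun s => exists t n, partition a b t n /\ s = psum g t n).

(* intrinsic distance: inf of lengths of continuous curves joining x, y;
   inf of the empty set is +oo (curves of infinite length do not affect the inf) *)
Definition dI (x y : X) : Rbar :=
  Glb_Rbar (fun l => exists a b (g : R -> X), a <= b /\ curve_continuous a b g /\
              g a = x /\ g b = y /\ curve_length a b g = Finite l).

End Metric.

(* Main.v *)
Require Import Defs.
From Stdlib Require Import Reals Lra ClassicalEpsilon Classical List Arith Lia.
From Coquelicot Require Import Coquelicot.
Open Scope R_scope.

Section Basic.
Context {X : Type} (d : X -> X -> R) (Hmet : is_metric X d).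

Lemma d_pos x y : 0 <= d x y. Proof. apply Hmet. Qed.
Lemma d_zero x y : d x y = 0 -> x = y. Proof. apply Hmet. Qed.
Lemma d_refl x : d x x = 0. Proof. apply Hmet. reflexivity. Qed.
Lemma d_sym x y : d x y = d y x. Proof. apply Hmet. Qed.
Lemma d_tri x y z : d x z <= d x y + d y z. Proof. apply Hmet. Qed.

Lemma list_max (l : list nat) : exists M, forall N, In N l -> (N <= M)%nat.
Proof.
  induction l as [|a l [M HM]]. exists 0%nat; intros N [].
  exists (Nat.max a M). intros N [<-|HN]. lia. specialize (HM N HN); lia.
Qed.

Lemma cluster (Hc : mcompact X d) (s : nat -> X) :
  exists z, forall r, 0 < r -> forall N, exists n, (N <= n)%nat /\ d z (s n) < r.
Proof.
  destruct (classic (exists z, forall r, 0 < r -> forall N, exists n, (N <= n)%nat /\ d z (s n) < r)) as [H|H]; [exact H|].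
  exfalso.
  set (U := fun (N : nat) (y : X) => exists r, 0 < r /\ forall n, (N <= n)%nat -> r <= d y (s n)).
  destruct (Hc nat U) as [l Hl].
  - intros N y [r [Hr Hy]]. exists (r/2). split. lra.
    intros y' Hy'. exists (r/2). split. lra. intros n Hn.
    specialize (Hy n Hn). pose proof (d_tri y y' (s n)). lra.
  - intros y. destruct (classic (exists N, U N y)) as [HN|HN]; [exact HN|].
    exfalso; apply H. exists y. intros r Hr N.
    destruct (classic (exists n, (N <= n)%nat /\ d y (s n) < r)) as [Hn|Hn]; [exact Hn|].
    exfalso; apply HN. exists N, r. split; [exact Hr|]. intros n Hn'.
    destruct (Rlt_le_dec (d y (s n)) r) as [Hlt|Hle]; [|exact Hle].
    exfalso; apply Hn; exists n; auto.
  - destruct (list_max l) as [M HM].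
    destruct (Hl (s M)) as [N [HNl [r [Hr Hrr]]]].
    specialize (Hrr M (HM N HNl)). rewrite d_refl in Hrr. lra.
Qed.

Definition ucont (u : X -> R) := forall x e, 0 < e -> exists delta, 0 < delta /\
  forall y, d x y < delta -> Rabs (u y - u x) < e.

Lemma closure_self (B : X -> Prop) z : B z -> closure X d B z.
Proof. intros Hz r Hr. exists z. rewrite d_refl. auto. Qed.

Lemma list_min (u : X -> R) (B : X -> Prop) (l : list X) :
  (exists b, In b l /\ B b) ->
  exists b, In b l /\ B b /\ forall i, In i l -> B i -> u b <= u i.
Proof.
  induction l as [|a l IH]. intros [b [[] _]].
  intros [b [Hb HBb]].
  destruct (classic (exists b, In b l /\ B b)) as [Hex|Hnex].
  - destruct (IH Hex) as [c [Hc [HBc Hmin]]].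
    destruct (classic (B a)) as [HBa|HBa].
    + destruct (Rle_dec (u a) (u c)) as [Hac|Hac].
      * exists a. split; [left; auto|]. split; [auto|].
        intros i [<-|Hi] HBi. lra. specialize (Hmin i Hi HBi). lra.
      * exists c. split; [right; auto|]. split; [auto|].
        intros i [<-|Hi] HBi. lra. auto.
    + exists c. split; [right; auto|]. split; [auto|].
      intros i [<-|Hi] HBi. contradiction. auto.
  - destruct Hb as [Hab|Hb]; [|exfalso; apply Hnex; eauto]. subst a.
    exists b. split; [left; auto|]. split; [auto|].
    intros i [<-|Hi] HBi. lra. exfalso; apply Hnex; eauto.
Qed.

Lemma attain_min (Hc : mcompact X d) (u : X -> R) (B : X -> Prop) :
  ucont u -> (exists b, B b) ->
  exists z, closure X d B z /\ forall b, B b -> u z <= u b.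
Proof.
  intros Hu HB.
  destruct (classic (exists z, closure X d B z /\ forall b, B b -> u z <= u b)) as [H|H]; [exact H|].
  exfalso.
  assert (H' : forall z, closure X d B z -> exists b, B b /\ u b < u z).
  { intros z Hz. apply NNPP. intros Hn. apply H. exists z. split; auto.
    intros b Hb. destruct (Rle_dec (u z) (u b)) as [h|h]; auto.
    exfalso; apply Hn. exists b. split; auto. lra. }
  set (U := fun (i : X) (z : X) => (B i /\ u i < u z) \/ (~ B i /\ ~ closure X d B z)).
  destruct (Hc X U) as [l Hl].
  - intros i z [[HBi Hiz]|[HBi Hcl]].
    + destruct (Hu z (u z - u i)) as [del [Hdel Hy]]. lra.
      exists del. split; auto. intros y Hzy. left. split; auto.
      specialize (Hy y Hzy). apply Rabs_def2 in Hy. lra.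
    + assert (Hr : exists r, 0 < r /\ forall y, B y -> r <= d z y).
      { apply NNPP; intros Hn. apply Hcl. intros r Hr.
        apply NNPP; intros Hn2. apply Hn. exists r. split; auto.
        intros y Hy. destruct (Rle_dec r (d z y)); auto. exfalso; apply Hn2.
        exists y. split; auto. lra. }
      destruct Hr as [r [Hr Hry]].
      exists (r/2). split. lra. intros y' Hy'. right. split; auto.
      intros Hcl'. destruct (Hcl' (r/2)) as [y [HBy Hy]]. lra.
      specialize (Hry y HBy). pose proof (d_tri z y' y). lra.
  - intros z. destruct (classic (closure X d B z)) as [Hz|Hz].
    + destruct (H' z Hz) as [b [Hb Hbz]]. exists b. left; auto.
    + exists z. right. split; auto. intros HBz. apply Hz. apply closure_self; auto.
  - destruct HB as [b0 Hb0].
    assert (Hex : exists b, In b l /\ B b).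
    { destruct (Hl b0) as [i [Hi [[HBi _]|[_ Hcl]]]]. eauto.
      exfalso; apply Hcl; apply closure_self; auto. }
    destruct (list_min u B l Hex) as [b [Hb [HBb Hmin]]].
    destruct (Hl b) as [i [Hi [[HBi Hib]|[_ Hcl]]]].
    + specialize (Hmin i Hi HBi). lra.
    + apply Hcl; apply closure_self; auto.
Qed.

End Basic.



Section Chains.
Context {X : Type} (d : X -> X -> R) (Hmet : is_metric X d).

Fixpoint chlen (p : X) (l : list X) : R :=
  match l with nil => 0 | y :: l' => d p y + chlen y l' end.
Fixpoint chsmall (e : R) (p : X) (l : list X) : Prop :=
  match l with nil => True | y :: l' => d p y < e /\ chsmall e y l' end.
Fixpoint chend (p : X) (l : list X) : X :=
  match l with nil => p | y :: l' => chend y l' end.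

Definition Ch e p q L := exists l, chsmall e p l /\ chend p l = q /\ chlen p l <= L.
Definition Rc p q L := forall e, 0 < e -> Ch e p q (L + e).

Lemma chlen_app l1 : forall p l2, chlen p (l1 ++ l2) = chlen p l1 + chlen (chend p l1) l2.
Proof. induction l1 as [|y l1 IH]; intros p l2; simpl. lra. rewrite IH. lra. Qed.
Lemma chend_app l1 : forall p l2, chend p (l1 ++ l2) = chend (chend p l1) l2.
Proof. induction l1 as [|y l1 IH]; intros p l2; simpl; auto. Qed.
Lemma chsmall_app e l1 : forall p l2, chsmall e p l1 -> chsmall e (chend p l1) l2 -> chsmall e p (l1 ++ l2).
Proof. induction l1 as [|y l1 IH]; intros p l2; simpl; auto. intros [H1 H2] H3; split; auto. Qed.
Lemma chsmall_app_inv e l1 : forall p l2, chsmall e p (l1 ++ l2) -> chsmall e p l1 /\ chsmall e (chend p l1) l2.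
Proof. induction l1 as [|y l1 IH]; intros p l2; simpl; auto. intros [H1 H2].
  destruct (IH y l2 H2); auto. Qed.
Lemma chsmall_mono e e' l : forall p, e <= e' -> chsmall e p l -> chsmall e' p l.
Proof. induction l as [|y l IH]; intros p He; simpl; auto. intros [H1 H2]; split; auto. lra. Qed.
Lemma chlen_ge l : forall p, d p (chend p l) <= chlen p l.
Proof. induction l as [|y l IH]; intros p; simpl. rewrite (d_refl d Hmet). lra.
  pose proof (IH y). pose proof (d_tri d Hmet p y (chend y l)). lra. Qed.
Lemma chlen_nonneg l : forall p, 0 <= chlen p l.
Proof. intros p. pose proof (chlen_ge l p). pose proof (d_pos d Hmet p (chend p l)). lra. Qed.

Lemma ch_rev e l : forall p, chsmall e p l -> exists l', chsmall e (chend p l) l' /\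
  chend (chend p l) l' = p /\ chlen (chend p l) l' = chlen p l.
Proof.
  induction l as [|y l IH]; intros p Hs.
  - exists nil. simpl. auto.
  - destruct Hs as [H1 H2]. destruct (IH y H2) as [l' [A [B C]]].
    exists (l' ++ p :: nil). simpl. split; [|split].
    + apply chsmall_app; auto. rewrite B. simpl. rewrite d_sym by auto. auto.
    + rewrite chend_app, B. reflexivity.
    + rewrite chlen_app, B, C. simpl. rewrite (d_sym d Hmet y p). lra.
Qed.

Lemma Ch_trans e p q r L1 L2 : Ch e p q L1 -> Ch e q r L2 -> Ch e p r (L1 + L2).
Proof.
  intros [l1 [A1 [B1 C1]]] [l2 [A2 [B2 C2]]]. exists (l1 ++ l2).
  split; [apply chsmall_app; subst; auto|]. split.
  rewrite chend_app; subst; auto. rewrite chlen_app. subst. lra.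
Qed.
Lemma Ch_mono e e' p q L L' : e <= e' -> L <= L' -> Ch e p q L -> Ch e' p q L'.
Proof. intros He HL [l [A [B C]]]. exists l. split; [eapply chsmall_mono; eauto|]. split; auto. lra. Qed.
Lemma Ch_step e p q : d p q < e -> Ch e p q (d p q).
Proof. intros H. exists (q :: nil). simpl. split; auto. split; auto. lra. Qed.
Lemma Ch_sym e p q L : Ch e p q L -> Ch e q p L.
Proof. intros [l [A [B C]]]. destruct (ch_rev e l p A) as [l' [A' [B' C']]].
  exists l'. subst q. split; auto. split; auto. lra. Qed.
Lemma Ch_dist e p q L : Ch e p q L -> d p q <= L.
Proof. intros [l [A [B C]]]. subst. pose proof (chlen_ge l p). lra. Qed.

Lemma Rc_refl p : Rc p p 0.
Proof. intros e He. exists nil. simpl. split; auto. split; auto. lra. Qed.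
Lemma Rc_sym p q L : Rc p q L -> Rc q p L.
Proof. intros H e He. apply Ch_sym; auto. Qed.
Lemma Rc_mono p q L L' : L <= L' -> Rc p q L -> Rc p q L'.
Proof. intros HL H e He. eapply Ch_mono; [apply Rle_refl| |apply H; auto]. lra. Qed.
Lemma Rc_trans p q r L1 L2 : Rc p q L1 -> Rc q r L2 -> Rc p r (L1 + L2).
Proof. intros H1 H2 e He.
  apply (Ch_mono (e/2) e p r (L1 + e/2 + (L2 + e/2))). lra. lra.
  apply Ch_trans with q; [apply H1|apply H2]; lra. Qed.
Lemma Rc_dist p q L : Rc p q L -> d p q <= L.
Proof. intros H. apply Rnot_lt_le. intros Hlt.
  assert (He : 0 < (d p q - L)/2) by lra.
  pose proof (Ch_dist _ _ _ _ (H _ He)). lra. Qed.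
Lemma Rc_nonneg p q L : Rc p q L -> 0 <= L.
Proof. intros H. pose proof (Rc_dist p q L H). pose proof (d_pos d Hmet p q). lra. Qed.

Lemma split_chain e (He : 0 < e) l : forall p c, 0 <= c -> chsmall e p l ->
  exists l1 l2, l = l1 ++ l2 /\ chlen p l1 <= c /\ Rmin c (chlen p l) - e <= chlen p l1.
Proof.
  induction l as [|y l IH]; intros p c Hc Hs.
  - exists nil, nil. simpl. split; auto. split. lra. unfold Rmin; destruct Rle_dec; lra.
  - destruct Hs as [H1 H2].
    destruct (Rle_dec (d p y) c) as [Hle|Hgt].
    + destruct (IH y (c - d p y)) as [l1 [l2 [E [A B]]]]. lra. auto.
      exists (y :: l1), l2. simpl. split; [rewrite E; reflexivity|]. split. lra.
      revert B. unfold Rmin. destruct Rle_dec; destruct Rle_dec; lra.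
    + exists nil, (y :: l). simpl. split; auto. split. lra.
      unfold Rmin. destruct Rle_dec; lra.
Qed.

Lemma mid_approx e p q L : 0 < e -> Ch e p q (L + e) ->
  exists m, Ch e p m ((L + e)/2) /\ Ch e m q ((L + e)/2 + e).
Proof.
  intros He [l [A [B C]]].
  pose proof (chlen_nonneg l p).
  destruct (split_chain e He l p ((L+e)/2)) as [l1 [l2 [E [F G]]]]. lra. auto.
  exists (chend p l1). subst l. apply chsmall_app_inv in A. destruct A as [A1 A2].
  rewrite chlen_app in *. rewrite chend_app in B.
  split. exists l1. auto.
  exists l2. split; auto. split; auto.
  pose proof (chlen_nonneg l2 (chend p l1)).
  revert G. unfold Rmin. destruct Rle_dec; lra.
Qed.

Lemma small_nat e : 0 < e -> exists N, / (INR N + 1) < e.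
Proof.
  intros He. destruct (INR_archimed e 1 He) as [N HN]. exists N.
  pose proof (pos_INR N).
  apply (Rmult_lt_reg_r (INR N + 1)). lra.
  rewrite Rinv_l by lra. nra.
Qed.

Lemma inv_mono m n : (m <= n)%nat -> / (INR n + 1) <= / (INR m + 1).
Proof. intros H. apply le_INR in H. pose proof (pos_INR m). apply Rinv_le_contravar; lra. Qed.

Lemma midpoint (Hc : mcompact X d) p q L : Rc p q L -> exists m, Rc p m (L/2) /\ Rc m q (L/2).
Proof.
  intros H.
  set (en := fun n : nat => / (INR n + 1)).
  assert (Hen : forall n, 0 < en n). { intros n. unfold en. pose proof (pos_INR n).
    apply Rinv_0_lt_compat. lra. }
  set (P := fun n m => Ch (en n) p m ((L + en n)/2) /\ Ch (en n) m q ((L + en n)/2 + en n)).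
  assert (HP : forall n, exists m, P n m). { intros n. apply mid_approx. auto. apply H. auto. }
  set (ms := fun n => epsilon (inhabits p) (P n)).
  assert (Hms : forall n, P n (ms n)). { intros n. apply epsilon_spec. auto. }
  destruct (cluster d Hmet Hc ms) as [m Hm].
  exists m. split.
  - intros e He. destruct (small_nat (e/4)) as [N HN]. lra.
    destruct (Hm (e/2) ltac:(lra) N) as [n [Hn Hd]].
    pose proof (inv_mono _ _ Hn). fold (en n) (en N) in H0, HN.
    destruct (Hms n) as [A _]. pose proof (Hen n).
    apply (Ch_mono e e p m ((L + en n)/2 + d (ms n) m)). lra.
    rewrite (d_sym d Hmet). lra.
    apply Ch_trans with (ms n). eapply Ch_mono; [|apply Rle_refl|exact A]. lra.
    apply Ch_step. rewrite (d_sym d Hmet). lra.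
  - intros e He. destruct (small_nat (e/4)) as [N HN]. lra.
    destruct (Hm (e/2) ltac:(lra) N) as [n [Hn Hd]].
    pose proof (inv_mono _ _ Hn). fold (en n) (en N) in H0, HN.
    destruct (Hms n) as [_ A]. pose proof (Hen n).
    apply (Ch_mono e e m q (d m (ms n) + ((L + en n)/2 + en n))). lra. lra.
    apply Ch_trans with (ms n). apply Ch_step. lra.
    eapply Ch_mono; [|apply Rle_refl|exact A]. lra.
Qed.

End Chains.



Section Curves.
Context {X : Type} (d : X -> X -> R) (Hmet : is_metric X d).

Lemma part_range a b t n : Defs.partition a b t n -> forall i, (i <= n)%nat -> a <= t i <= b.
Proof.
  intros [H0 [Hn Hm]].
  assert (A : forall i, (i <= n)%nat -> t 0%nat <= t i).
  { induction i; intros Hi. lra. pose proof (Hm i ltac:(lia)). pose proof (IHi ltac:(lia)). lra. }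
  assert (B : forall m i, (i + m = n)%nat -> t i <= t n).
  { induction m; intros i Hi. replace i with n by lia. lra.
    pose proof (Hm i ltac:(lia)). pose proof (IHm (S i) ltac:(lia)). lra. }
  intros i Hi. split. rewrite <- H0. auto. rewrite <- Hn. apply (B (n - i)%nat). lia.
Qed.

Lemma length_ge a b g : a <= b -> Rbar_le (Finite (d (g a) (g b))) (curve_length X d a b g).
Proof.
  intros Hab. destruct (Lub_Rbar_correct (fun s => exists t n, Defs.partition a b t n /\ s = psum X d g t n)) as [Hub _].
  apply Hub. exists (fun i => match i with O => a | _ => b end), 1%nat.
  split. split; auto. split; auto. intros i Hi. destruct i; [lra|lia].
  simpl. lra.
Qed.

Lemma length_nonneg a b g l : a <= b -> curve_length X d a b g = Finite l -> 0 <= l.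
Proof. intros Hab H. pose proof (length_ge a b g Hab). rewrite H in H0. simpl in H0.
  pose proof (d_pos d Hmet (g a) (g b)). lra. Qed.

Lemma lip_curve a b L g : a <= b -> 0 <= L ->
  (forall s t, a <= s <= b -> a <= t <= b -> d (g s) (g t) <= L * Rabs (t - s)) ->
  curve_continuous X d a b g /\ exists l, curve_length X d a b g = Finite l /\ l <= L * (b - a).
Proof.
  intros Hab HL Hlip. split.
  - intros t Ht e He. exists (e / (L + 1)). split. apply Rdiv_lt_0_compat; lra.
    intros s Hs Hst. pose proof (Hlip t s Ht Hs).
    assert (L * Rabs (s - t) <= L * (e / (L+1))) by (apply Rmult_le_compat_l; lra).
    assert (L * (e / (L+1)) < e). { apply (Rmult_lt_reg_r (L+1)). lra.
      unfold Rdiv. rewrite Rmult_assoc, Rmult_assoc, Rinv_l by lra. nra. }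
    lra.
  - set (E := fun s => exists t n, Defs.partition a b t n /\ s = psum X d g t n).
    assert (Hub : forall s, E s -> s <= L * (b - a)).
    { intros s [t [n [Hp ->]]]. pose proof (part_range a b t n Hp) as Hr.
      destruct Hp as [H0 [Hn Hm]].
      assert (forall m, (m <= n)%nat -> psum X d g t m <= L * (t m - t 0%nat)).
      { induction m; intros Hmn; simpl. lra.
        pose proof (IHm ltac:(lia)). pose proof (Hm m ltac:(lia)).
        pose proof (Hlip (t m) (t (S m)) (Hr m ltac:(lia)) (Hr (S m) Hmn)).
        rewrite Rabs_right in H2 by lra. nra. }
      pose proof (H n (le_n n)). rewrite H0, Hn in H1. auto. }
    destruct (Lub_Rbar_correct E) as [H1 H2].
    assert (Hle : Rbar_le (Lub_Rbar E) (L * (b - a))).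
    { apply H2. intros x Hx. simpl. auto. }
    pose proof (length_ge a b g Hab) as Hge. unfold curve_length in Hge. fold E in Hge.
    unfold curve_length. fold E.
    destruct (Lub_Rbar E) as [l| |]; simpl in Hle, Hge; try contradiction.
    exists l. auto.
Qed.

Lemma dI_bound p q a b g l : a <= b -> curve_continuous X d a b g -> g a = p -> g b = q ->
  curve_length X d a b g = Finite l ->
  is_finite (dI X d p q) /\ 0 <= real (dI X d p q) <= l.
Proof.
  intros Hab Hc Ha Hb Hl. unfold dI.
  set (S := fun l0 => exists a b (g : R -> X), a <= b /\ curve_continuous X d a b g /\
              g a = p /\ g b = q /\ curve_length X d a b g = Finite l0).
  destruct (Glb_Rbar_correct S) as [H1 H2].
  assert (HS : S l) by (exists a, b, g; auto).
  pose proof (H1 l HS).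
  assert (Rbar_le 0 (Glb_Rbar S)).
  { apply H2. intros x [a' [b' [g' [A [B [C [D E]]]]]]]. simpl. eapply length_nonneg; eauto. }
  destruct (Glb_Rbar S) as [G| |]; simpl in *; try contradiction.
  split. reflexivity. lra.
Qed.

Lemma grid N : forall x, 0 <= x <= INR N -> exists k, (k <= N)%nat /\ Rabs (x - INR k) <= 1.
Proof.
  induction N; intros x Hx.
  - exists 0%nat. split; auto. simpl in *. rewrite Rabs_right; lra.
  - rewrite S_INR in Hx. destruct (Rle_dec x (INR N)) as [h|h].
    + destruct (IHN x) as [k [Hk Hk']]. split; lra. exists k. split; auto.
    + exists N. split; auto. rewrite Rabs_right; lra.
Qed.

Lemma pow2_ge N : INR N + 1 <= 2 ^ N.
Proof. induction N. simpl; lra. rewrite S_INR. simpl. pose proof (pos_INR N). lra. Qed.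

Lemma pow2_pos n : 0 < 2 ^ n.
Proof. apply pow_lt. lra. Qed.

Lemma lim_pow2 a b c : 0 <= c -> (forall n, a <= b + c / 2 ^ n) -> a <= b.
Proof.
  intros Hc H. apply Rle_plus_epsilon. intros e He.
  destruct (small_nat (e / (c + 1))) as [N HN]. apply Rdiv_lt_0_compat; lra.
  pose proof (H N). pose proof (pow2_ge N). pose proof (pos_INR N). pose proof (pow2_pos N).
  assert (c / 2 ^ N <= c / (INR N + 1)).
  { unfold Rdiv. apply Rmult_le_compat_l; auto. apply Rinv_le_contravar; lra. }
  assert (c / (INR N + 1) < e).
  { unfold Rdiv. apply Rle_lt_trans with ((c+1) * / (INR N + 1)).
    apply Rmult_le_compat_r. left; apply Rinv_0_lt_compat; lra. lra.
    apply (Rmult_lt_reg_l (/ (c+1))). apply Rinv_0_lt_compat; lra.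
    rewrite <- Rmult_assoc, Rinv_l by lra. rewrite Rmult_1_l, Rmult_comm. exact HN. }
  lra.
Qed.

Section Construct.
Context (Hc : mcompact X d) (p q : X) (L : R) (HR : Rc d p q L).

Definition mid a b K := epsilon (inhabits a) (fun m => Rc d a m (K/2) /\ Rc d m b (K/2)).

Lemma mid_spec a b K : Rc d a b K -> Rc d a (mid a b K) (K/2) /\ Rc d (mid a b K) b (K/2).
Proof. intros H. unfold mid. apply epsilon_spec. apply midpoint; auto. Qed.

Fixpoint F (n k : nat) : X :=
  match n with
  | O => match k with O => p | _ => q end
  | S n' => if Nat.even k then F n' (Nat.div2 k)
            else mid (F n' (Nat.div2 k)) (F n' (S (Nat.div2 k))) (L / 2 ^ n')
  end.

Lemma F_S n k : F (S n) k = if Nat.even k then F n (Nat.div2 k)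
            else mid (F n (Nat.div2 k)) (F n (S (Nat.div2 k))) (L / 2 ^ n).
Proof. reflexivity. Qed.

Lemma F_even n j : F (S n) (2 * j) = F n j.
Proof. rewrite F_S. rewrite Nat.even_even, Nat.div2_double. reflexivity. Qed.
Lemma F_odd n j : F (S n) (2 * j + 1) = mid (F n j) (F n (S j)) (L / 2 ^ n).
Proof. rewrite F_S, Nat.even_odd. rewrite Nat.add_1_r, Nat.div2_succ_double. reflexivity. Qed.

Lemma halfpow n : L / 2 ^ n / 2 = L / 2 ^ S n.
Proof. simpl. pose proof (pow2_pos n). field. lra. Qed.

Lemma F_inv n : forall k, (k < 2 ^ n)%nat -> Rc d (F n k) (F n (S k)) (L / 2 ^ n).
Proof.
  induction n; intros k Hk.
  - simpl in Hk. replace k with 0%nat by lia. simpl. replace (L / 1) with L by field. auto.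
  - rewrite Nat.pow_succ_r' in Hk.
    destruct (Nat.Even_or_Odd k) as [[j ->]|[j ->]].
    + assert (Hj : (j < 2 ^ n)%nat) by lia.
      rewrite F_even. replace (S (2 * j)) with (2 * j + 1)%nat by lia. rewrite F_odd.
      rewrite <- halfpow. apply mid_spec. auto.
    + assert (Hj : (j < 2 ^ n)%nat) by lia.
      rewrite F_odd. replace (S (2 * j + 1)) with (2 * S j)%nat by lia. rewrite F_even.
      rewrite <- halfpow. apply mid_spec. auto.
Qed.

Lemma F_zero n : F n 0 = p.
Proof. induction n. reflexivity. change 0%nat with (2 * 0)%nat. rewrite F_even. auto. Qed.
Lemma F_top n : F n (2 ^ n) = q.
Proof. induction n. reflexivity. rewrite Nat.pow_succ_r', F_even. auto. Qed.

Lemma F_refine j : forall n k, F (n + j) (k * 2 ^ j) = F n k.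
Proof.
  induction j; intros n k. rewrite Nat.add_0_r, Nat.mul_1_r. reflexivity.
  rewrite Nat.add_succ_r. replace (k * 2 ^ S j)%nat with (2 * (k * 2 ^ j))%nat
    by (rewrite Nat.pow_succ_r'; ring). rewrite F_even. auto.
Qed.

Lemma L_nonneg : 0 <= L.
Proof. eapply Rc_nonneg; eauto. Qed.

Lemma F_dist_m n m : forall i, (i + m <= 2 ^ n)%nat -> d (F n i) (F n (i + m)) <= INR m * (L / 2 ^ n).
Proof.
  induction m; intros i Hi.
  - rewrite Nat.add_0_r, (d_refl d Hmet). simpl. lra.
  - pose proof (IHm i ltac:(lia)).
    pose proof (Rc_dist d Hmet _ _ _ (F_inv n (i + m) ltac:(lia))).
    rewrite Nat.add_succ_r. pose proof (d_tri d Hmet (F n i) (F n (i + m)) (F n (S (i + m)))).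
    rewrite S_INR. lra.
Qed.

Lemma F_dist n i j : (i <= 2 ^ n)%nat -> (j <= 2 ^ n)%nat ->
  d (F n i) (F n j) <= Rabs (INR j - INR i) * (L / 2 ^ n).
Proof.
  intros Hi Hj. destruct (Nat.le_ge_cases i j) as [h|h].
  - pose proof (F_dist_m n (j - i) i ltac:(lia)) as H.
    replace (i + (j - i))%nat with j in H by lia. rewrite minus_INR in H by lia.
    rewrite Rabs_right. exact H. apply le_INR in h. lra.
  - pose proof (F_dist_m n (i - j) j ltac:(lia)) as H.
    replace (j + (i - j))%nat with i in H by lia. rewrite minus_INR in H by lia.
    rewrite (d_sym d Hmet), Rabs_left1. replace (- (INR j - INR i)) with (INR i - INR j) by ring. exact H.
    apply le_INR in h. lra.
Qed.

Lemma F_cross t n m k k' : (n <= m)%nat -> (k <= 2 ^ n)%nat -> (k' <= 2 ^ m)%nat ->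
  Rabs (t * 2 ^ n - INR k) <= 1 -> Rabs (t * 2 ^ m - INR k') <= 1 ->
  d (F n k) (F m k') <= 2 * L / 2 ^ n.
Proof.
  intros Hnm Hk Hk' H1 H2.
  replace m with (n + (m - n))%nat in * by lia. set (j := (m - n)%nat) in *.
  rewrite <- (F_refine j n k).
  assert (Hkj : (k * 2 ^ j <= 2 ^ (n + j))%nat).
  { rewrite Nat.pow_add_r. apply Nat.mul_le_mono_r. auto. }
  pose proof (F_dist (n + j) (k * 2 ^ j) k' Hkj Hk').
  rewrite mult_INR, pow_INR in H. replace (INR 2) with 2 in H by (simpl; lra). rewrite pow_add in *.
  pose proof (pow2_pos n). pose proof (pow2_pos j). pose proof L_nonneg.
  assert (Rabs (INR k' - INR k * 2 ^ j) <= 1 + 2 ^ j).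
  { replace (INR k' - INR k * 2 ^ j) with (- (t * (2 ^ n * 2 ^ j) - INR k') + (t * 2 ^ n - INR k) * 2 ^ j) by ring.
    eapply Rle_trans. apply Rabs_triang. rewrite Rabs_Ropp, Rabs_mult, (Rabs_right (2 ^ j)) by lra.
    nra. }
  assert (Rabs (INR k' - INR k * 2 ^ j) * (L / (2 ^ n * 2 ^ j)) <= (1 + 2 ^ j) * (L / (2 ^ n * 2 ^ j))).
  { apply Rmult_le_compat_r; auto. apply Rdiv_le_0_compat; nra. }
  assert ((1 + 2 ^ j) * (L / (2 ^ n * 2 ^ j)) <= 2 * L / 2 ^ n).
  { replace ((1 + 2 ^ j) * (L / (2 ^ n * 2 ^ j))) with (L / (2^n * 2^j) + L / 2 ^ n) by (field; lra).
    replace (2 * L / 2 ^ n) with (L / 2 ^ n + L / 2 ^ n) by (field; lra).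
    apply Rplus_le_compat_r. unfold Rdiv. apply Rmult_le_compat_l; auto.
    apply Rinv_le_contravar. lra. assert (1 <= 2 ^ j) by (apply pow_R1_Rle; lra). nra. }
  lra.
Qed.

Definition Pt (t : R) (z : X) := forall n k, (k <= 2 ^ n)%nat -> Rabs (t * 2 ^ n - INR k) <= 1 ->
  d z (F n k) <= 2 * L / 2 ^ n.

Definition gc (t : R) := epsilon (inhabits p) (Pt t).

Lemma grid_t t n : 0 <= t <= 1 -> exists k, (k <= 2 ^ n)%nat /\ Rabs (t * 2 ^ n - INR k) <= 1.
Proof. intros Ht. apply grid. rewrite pow_INR. replace (INR 2) with 2 by (simpl; lra). pose proof (pow2_pos n). nra. Qed.

Lemma gc_spec t : 0 <= t <= 1 -> Pt t (gc t).
Proof.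
  intros Ht. unfold gc. apply epsilon_spec.
  set (ks := fun m => epsilon (inhabits 0%nat) (fun k => (k <= 2 ^ m)%nat /\ Rabs (t * 2 ^ m - INR k) <= 1)).
  assert (Hks : forall m, (ks m <= 2 ^ m)%nat /\ Rabs (t * 2 ^ m - INR (ks m)) <= 1).
  { intros m. apply epsilon_spec. apply grid_t. auto. }
  destruct (cluster d Hmet Hc (fun m => F m (ks m))) as [z Hz].
  exists z. intros n k Hk Htk. apply Rle_plus_epsilon. intros e He.
  destruct (Hz e He n) as [m [Hnm Hd]].
  destruct (Hks m) as [A B].
  pose proof (F_cross t n m k (ks m) Hnm Hk A Htk B).
  pose proof (d_tri d Hmet z (F m (ks m)) (F n k)). rewrite (d_sym d Hmet (F m (ks m))) in H0. lra.
Qed.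

Lemma gc_lip s t : 0 <= s <= 1 -> 0 <= t <= 1 -> d (gc s) (gc t) <= L * Rabs (t - s).
Proof.
  intros Hs Ht. pose proof L_nonneg.
  apply (lim_pow2 _ _ (6 * L)). lra. intros n.
  destruct (grid_t s n Hs) as [i [Hi Hi']]. destruct (grid_t t n Ht) as [j [Hj Hj']].
  pose proof (gc_spec s Hs n i Hi Hi') as E1. pose proof (gc_spec t Ht n j Hj Hj') as E2.
  pose proof (F_dist n i j Hi Hj) as E3. pose proof (pow2_pos n) as E4.
  pose proof (d_tri d Hmet (gc s) (F n i) (gc t)) as E5.
  pose proof (d_tri d Hmet (F n i) (F n j) (gc t)) as E6. rewrite (d_sym d Hmet (F n j)) in E6.
  assert (Rabs (INR j - INR i) <= Rabs (t - s) * 2 ^ n + 2).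
  { replace (INR j - INR i) with (- (t * 2 ^ n - INR j) + (s * 2 ^ n - INR i) + (t - s) * 2 ^ n) by ring.
    eapply Rle_trans. apply Rabs_triang. eapply Rle_trans. apply Rplus_le_compat_r. apply Rabs_triang.
    rewrite Rabs_Ropp, Rabs_mult, (Rabs_right (2 ^ n)) by lra. lra. }
  assert (Rabs (INR j - INR i) * (L / 2 ^ n) <= (Rabs (t - s) * 2 ^ n + 2) * (L / 2 ^ n)).
  { apply Rmult_le_compat_r; auto. apply Rdiv_le_0_compat; lra. }
  replace ((Rabs (t - s) * 2 ^ n + 2) * (L / 2 ^ n)) with (L * Rabs (t - s) + 2 * L / 2 ^ n) in H1 by (field; lra).
  replace (6 * L / 2 ^ n) with (2 * L / 2 ^ n + 2 * L / 2 ^ n + 2 * L / 2^n) by (field; lra).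
  lra.
Qed.

Lemma gc_end_eq z t kf : 0 <= t <= 1 -> (forall n, (kf n <= 2 ^ n)%nat /\ Rabs (t * 2 ^ n - INR (kf n)) <= 1 /\ F n (kf n) = z) ->
  gc t = z.
Proof.
  intros Ht H. apply (d_zero d Hmet). pose proof L_nonneg.
  assert (d (gc t) z <= 0).
  { apply (lim_pow2 _ _ (2 * L)). lra. intros n. destruct (H n) as [A [B C]].
    pose proof (gc_spec t Ht n (kf n) A B). rewrite C in H1. lra. }
  pose proof (d_pos d Hmet (gc t) z). lra.
Qed.

Lemma gc_0 : gc 0 = p.
Proof. apply (gc_end_eq p 0 (fun _ => 0%nat)). lra. intros n. split. lia. split.
  simpl. rewrite Rmult_0_l, Rminus_0_r, Rabs_R0. lra. apply F_zero. Qed.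
Lemma gc_1 : gc 1 = q.
Proof. apply (gc_end_eq q 1 (fun n => 2 ^ n)%nat). lra. intros n. split. lia. split.
  rewrite pow_INR. replace (INR 2) with 2 by (simpl; lra). rewrite Rmult_1_l, Rminus_diag, Rabs_R0. lra. apply F_top. Qed.

Lemma Rc_dI : is_finite (dI X d p q) /\ 0 <= real (dI X d p q) <= L.
Proof.
  pose proof L_nonneg.
  destruct (lip_curve 0 1 L gc) as [Hcont [l [Hl Hle]]]. lra. auto.
  intros s t Hs Ht. apply gc_lip; auto.
  destruct (dI_bound p q 0 1 gc l) as [A B]; auto. lra. apply gc_0. apply gc_1.
  split; auto. lra.
Qed.

End Construct.
End Curves.



Section ToChain.
Context {X : Type} (d : X -> X -> R) (Hmet : is_metric X d).

Definition fineP (g : R -> X) e a s := exists t n, t 0%nat = a /\ t n = s /\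
  (forall i, (i < n)%nat -> t i <= t (S i)) /\
  (forall i, (i < n)%nat -> d (g (t i)) (g (t (S i))) < e).

Lemma fineP_ext g e a s s' : fineP g e a s -> s <= s' -> d (g s) (g s') < e -> fineP g e a s'.
Proof.
  intros [t [n [H0 [Hn [Hm Hd]]]]] Hss' Hg.
  exists (fun i => if Nat.leb i n then t i else s'), (S n).
  split; [simpl; auto|]. split.
  { destruct (Nat.leb_spec (S n) n). lia. auto. }
  split; intros i Hi.
  - destruct (Nat.leb_spec i n); destruct (Nat.leb_spec (S i) n); try lia.
    apply Hm; lia. replace i with n by lia. lra.
  - destruct (Nat.leb_spec i n); destruct (Nat.leb_spec (S i) n); try lia.
    apply Hd; lia. replace i with n by lia. rewrite Hn. auto.
Qed.

Lemma fine_partition a b g e : a <= b -> curve_continuous X d a b g -> 0 < e ->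
  exists t n, Defs.partition a b t n /\ forall i, (i < n)%nat -> d (g (t i)) (g (t (S i))) < e.
Proof.
  intros Hab Hc He.
  set (S := fun s => a <= s <= b /\ fineP g e a s).
  assert (Ha : S a).
  { split. lra. exists (fun _ => a), 0%nat. repeat split; intros; lia. }
  destruct (completeness S) as [sig [Hub Hlub]].
  { exists b. intros x [Hx _]. lra. }
  { exists a. auto. }
  assert (Hsig : a <= sig <= b).
  { split. apply Hub. auto. apply Hlub. intros x [Hx _]. lra. }
  destruct (Hc sig Hsig (e/2)) as [del [Hdel Hcd]]. lra.
  assert (Hs : exists s, S s /\ sig - del < s).
  { apply NNPP. intros Hn. assert (sig <= sig - del). apply Hlub. intros x Hx.
    destruct (Rle_dec x (sig - del)); auto. exfalso; apply Hn. exists x. split; auto. lra. lra. }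
  destruct Hs as [s [[Hs1 Hs2] Hs3]].
  assert (Hssig : s <= sig) by (apply Hub; split; auto).
  set (s' := Rmin (sig + del/2) b).
  assert (Hs' : sig <= s' <= sig + del/2) by (unfold s', Rmin; destruct Rle_dec; lra).
  assert (Hd1 : d (g sig) (g s) < e/2). { apply Hcd. lra. rewrite Rabs_left1; lra. }
  assert (Hd2 : d (g sig) (g s') < e/2). { apply Hcd. unfold s', Rmin; destruct Rle_dec; lra. rewrite Rabs_right; lra. }
  assert (HS' : S s').
  { split. unfold s', Rmin; destruct Rle_dec; lra.
    apply fineP_ext with s; auto. lra.
    pose proof (d_tri d Hmet (g s) (g sig) (g s')). rewrite (d_sym d Hmet (g s) (g sig)) in H. lra. }
  assert (s' <= sig) by (apply Hub; auto).
  assert (Hb : s' = b) by (unfold s' in *; unfold Rmin in *; destruct Rle_dec; lra).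
  destruct HS' as [_ [t [n [H0 [Hn [Hm Hd]]]]]].
  exists t, n. split. split; auto. split; auto. congruence. auto.
Qed.

Lemma curve_Rc a b g p q l : a <= b -> curve_continuous X d a b g -> g a = p -> g b = q ->
  curve_length X d a b g = Finite l -> Rc d p q l.
Proof.
  intros Hab Hc Ha Hb Hl e He.
  destruct (fine_partition a b g e Hab Hc He) as [t [n [Hp Hd]]].
  assert (Hps : psum X d g t n <= l).
  { destruct (Lub_Rbar_correct (fun s => exists t n, Defs.partition a b t n /\ s = psum X d g t n)) as [Hub _].
    unfold curve_length in Hl. rewrite Hl in Hub. apply (Hub (psum X d g t n)). exists t, n. auto. }
  assert (Hch : forall m, (m <= n)%nat -> exists lst, chsmall d e (g (t 0%nat)) lst /\
     chend (g (t 0%nat)) lst = g (t m) /\ chlen d (g (t 0%nat)) lst = psum X d g t m).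
  { induction m; intros Hm.
    - exists nil. simpl. auto.
    - destruct (IHm ltac:(lia)) as [lst [A [B C]]].
      exists (lst ++ g (t (S m)) :: nil). split; [|split].
      + apply chsmall_app; [exact A|]. rewrite B. simpl. split; [apply Hd; lia|exact I].
      + rewrite chend_app, B. reflexivity.
      + rewrite chlen_app, B, C. simpl. lra. }
  destruct (Hch n (le_n n)) as [lst [A [B C]]].
  destruct Hp as [H0 [Hn _]].
  exists lst. rewrite H0, Ha in A, B, C. split; auto. split. rewrite B, Hn; auto. lra.
Qed.

Lemma dI_approx p q eta : is_finite (dI X d p q) -> 0 < eta ->
  exists L, Rc d p q L /\ L <= real (dI X d p q) + eta.
Proof.
  intros Hf He. unfold dI in *.
  set (S := fun l0 => exists a b (g : R -> X), a <= b /\ curve_continuous X d a b g /\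
              g a = p /\ g b = q /\ curve_length X d a b g = Finite l0) in *.
  destruct (Glb_Rbar_correct S) as [H1 H2].
  destruct (Glb_Rbar S) as [G| |]; try discriminate. simpl.
  destruct (classic (exists l, S l /\ l < G + eta)) as [[l [[a [b [g [A [B [C [D E]]]]]]] Hl]]|Hn].
  - exists l. split. eapply curve_Rc; eauto. lra.
  - assert (Rbar_le (G + eta) G). apply H2. intros x Hx. simpl.
    destruct (Rle_dec (G + eta) x); auto. exfalso; apply Hn. exists x. split; auto. lra.
    simpl in H. lra.
Qed.

End ToChain.



Section Descent.
Context {X : Type} (d : X -> X -> R) (Hmet : is_metric X d) (Hc : mcompact X d)
  (HE : E10_property X d).

Lemma non_isolated x0 q : q <> x0 -> forall r, 0 < r -> exists y, 0 < d x0 y < r.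
Proof.
  intros Hq r Hr. apply NNPP. intros Hn.
  destruct (HE (fun z => z = x0)) as [u [_ [Hs _]]].
  - intros z Hz. subst z. exists r. split; auto. intros y Hy.
    destruct (Rlt_dec 0 (d x0 y)) as [h|h]. exfalso; apply Hn; eauto.
    pose proof (d_pos d Hmet x0 y). symmetry. apply (d_zero d Hmet). lra.
  - exists x0; auto.
  - exists q; auto.
  - specialize (Hs x0 eq_refl). unfold local_slope in Hs.
    destruct excluded_middle_informative as [Hi|Hni].
    + injection Hs. lra.
    + apply Hni. exists 1. split. lra. intros y Hy [H1 H2].
      destruct (Hy (d x0 y) H1) as [y' [Hy' Hd]]. subst y'.
      rewrite (d_sym d Hmet) in Hd. lra.
Qed.

Section WithU.
Context (x0 : X) (u : X -> R) (Hni : forall r, 0 < r -> exists y, 0 < d x0 y < r)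
  (Hu : ucont d u) (Hu0 : u x0 = 0)
  (Hstep : forall z, z <> x0 -> forall r, 0 < r -> exists w, 0 < d z w < r /\ u z - u w > 3/4 * d z w).

Lemma descent e : 0 < e -> forall z, Ch d e z x0 (2 * u z + e).
Proof.
  intros He z0. apply NNPP. intros Hz0.
  set (B := fun z => ~ Ch d e z x0 (2 * u z + e)).
  destruct (attain_min d Hmet Hc u B Hu) as [z [Hcl Hmin]]. exists z0; auto.
  destruct (classic (z = x0)) as [Hzx|Hzx].
  - subst z. destruct (Hcl e He) as [b [Hb Hdb]]. apply Hb.
    pose proof (Hmin b Hb). pose proof (d_pos d Hmet x0 b).
    apply (Ch_mono d e e b x0 (d b x0)). lra. rewrite (d_sym d Hmet). lra.
    apply Ch_step. rewrite (d_sym d Hmet). auto.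
  - destruct (Hstep z Hzx (e/2)) as [w [[Hw1 Hw2] Hw3]]. lra.
    assert (HCw : Ch d e w x0 (2 * u w + e)).
    { apply NNPP. intros Hn. pose proof (Hmin w Hn). lra. }
    destruct (Hcl (d z w / 2)) as [b [Hb Hdb]]. lra.
    apply Hb. pose proof (Hmin b Hb).
    pose proof (d_tri d Hmet b z w). rewrite (d_sym d Hmet b z) in H0.
    apply (Ch_mono d e e b x0 (d b w + (2 * u w + e))). lra. lra.
    apply Ch_trans with w; auto. apply Ch_step. lra.
Qed.

Lemma descent_Rc z : Rc d z x0 (2 * u z).
Proof. intros e He. apply descent; auto. Qed.
End WithU.

Lemma E_prop x0 : (forall x, exists L, Rc d x x0 L) /\
  (forall eps, 0 < eps -> exists delta, 0 < delta /\ forall x, d x0 x < delta -> Rc d x x0 eps).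
Proof.
  destruct (classic (exists q, q <> x0)) as [[q Hq]|Hall].
  - pose proof (non_isolated x0 q Hq) as Hni.
    set (Omega := fun z => z <> x0).
    destruct (HE Omega) as [u [Hcont [Hslope Hbd]]].
    + intros z Hz. exists (d z x0). split.
      pose proof (d_pos d Hmet z x0). destruct (Req_dec (d z x0) 0) as [h|h].
      apply (d_zero d Hmet) in h. contradiction. lra.
      intros y Hy Hyx. subst y. lra.
    + exists q. auto.
    + exists x0. unfold Omega. auto.
    + assert (Hall : forall z, closure X d Omega z).
      { intros z r Hr. destruct (classic (z = x0)) as [->|hz].
        destruct (Hni r Hr) as [y [Hy1 Hy2]]. exists y. split; auto.
        intros ->. rewrite (d_refl d Hmet) in Hy1. lra.
        exists z. split; auto. rewrite (d_refl d Hmet). auto. }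
      assert (Hu : ucont d u).
      { intros x e He. destruct (Hcont x (Hall x) e He) as [del [Hdel H]].
        exists del. split; auto. }
      assert (Hu0 : u x0 = 0).
      { apply Hbd. split; auto. intros [r [Hr H]]. apply (H x0). rewrite (d_refl d Hmet); auto. auto. }
      assert (Hstep : forall z, z <> x0 -> forall r, 0 < r -> exists w, 0 < d z w < r /\ u z - u w > 3/4 * d z w).
      { intros z Hz r Hr. pose proof (Hslope z Hz) as Hs. unfold local_slope in Hs.
        destruct excluded_middle_informative as [Hi|Hnis]. injection Hs; lra.
        unfold Rbar_glb in Hs.
        set (Sg := fun v : Rbar => exists r0, 0 < r0 /\ v = slope_sup X d (closure X d Omega) u z r0) in *.
        pose proof (proj2_sig (Rbar_ex_glb Sg)) as Hg. rewrite Hs in Hg.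
        destruct Hg as [Hlb _].
        assert (H1 : Rbar_le 1 (slope_sup X d (closure X d Omega) u z r)). { apply Hlb. exists r; auto. }
        unfold slope_sup in H1.
        set (V := fun v => exists x, closure X d Omega x /\ 0 < d z x < r /\ v = Rmax (u z - u x) 0 / d z x) in *.
        destruct (classic (exists v, V v /\ 3/4 < v)) as [[v [[w [_ [Hw ->]]] Hv]]|Hn].
        - exists w. split; auto.
          unfold Rmax in Hv. destruct Rle_dec as [h|h].
          + unfold Rdiv in Hv. rewrite Rmult_0_l in Hv. lra.
          + assert (E : u z - u w = (u z - u w) / d z w * d z w) by (field; lra). nra.
        - destruct (Lub_Rbar_correct V) as [_ Hl].
          assert (Rbar_le (Lub_Rbar V) (3/4)).
          { apply Hl. intros x Hx. simpl. destruct (Rle_dec x (3/4)); auto.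
            exfalso; apply Hn. exists x. split; auto. lra. }
          destruct (Lub_Rbar V); simpl in *; try contradiction. lra. }
      split.
      * intros x. exists (2 * u x). apply (descent_Rc x0 u Hu Hu0 Hstep).
      * intros eps Heps. destruct (Hu x0 (eps/2)) as [del [Hdel H]]. lra.
        exists del. split; auto. intros x Hx. specialize (H x Hx). rewrite Hu0 in H.
        apply Rabs_def2 in H.
        apply Rc_mono with (2 * u x). lra. apply (descent_Rc x0 u Hu Hu0 Hstep).
  - assert (Heq : forall x, x = x0). { intros x. apply NNPP. intros h. apply Hall. eauto. }
    split.
    + intros x. exists 0. rewrite (Heq x). apply Rc_refl.
    + intros eps Heps. exists 1. split. lra. intros x _. rewrite (Heq x).
      apply Rc_mono with 0. lra. apply Rc_refl.
Qed.

End Descent.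

Theorem proposition5p2 (X : Type) (d : X -> X -> R)
  (Hmet : is_metric X d) (Hcpt : mcompact X d) (HE : E10_property X d) :
  (forall x y, is_finite (dI X d x y)) /\
  (forall x y eps, 0 < eps -> exists delta, 0 < delta /\
     forall x' y', d x x' < delta -> d y y' < delta ->
       Rabs (real (dI X d x' y') - real (dI X d x y)) < eps).
Proof.
  assert (Hfin : forall x y, is_finite (dI X d x y)).
  { intros x y. destruct (proj1 (E_prop d Hmet Hcpt HE y) x) as [L HL].
    apply (Rc_dI d Hmet Hcpt x y L HL). }
  split; auto.
  intros x y eps Heps.
  destruct (E_prop d Hmet Hcpt HE x) as [_ H1]. destruct (E_prop d Hmet Hcpt HE y) as [_ H2].
  destruct (H1 (eps/3)) as [d1 [Hd1 K1]]. lra.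
  destruct (H2 (eps/3)) as [d2 [Hd2 K2]]. lra.
  exists (Rmin d1 d2). split. apply Rmin_pos; auto.
  intros x' y' Hx Hy.
  assert (A1 : Rc d x' x (eps/3)) by (apply K1; eapply Rlt_le_trans; [exact Hx|apply Rmin_l]).
  assert (A2 : Rc d y' y (eps/3)) by (apply K2; eapply Rlt_le_trans; [exact Hy|apply Rmin_r]).
  destruct (dI_approx d Hmet x y (eps/6) (Hfin x y)) as [L1 [HL1 HL1']]. lra.
  destruct (dI_approx d Hmet x' y' (eps/6) (Hfin x' y')) as [L2 [HL2 HL2']]. lra.
  assert (B1 : Rc d x' y' (eps/3 + L1 + eps/3)).
  { apply Rc_trans with y. apply Rc_trans with x; auto. apply Rc_sym; auto. }
  assert (B2 : Rc d x y (eps/3 + L2 + eps/3)).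
  { apply Rc_trans with y'. apply Rc_trans with x'; auto. apply Rc_sym; auto. auto. }
  destruct (Rc_dI d Hmet Hcpt x' y' _ B1) as [_ [_ C1]].
  destruct (Rc_dI d Hmet Hcpt x y _ B2) as [_ [_ C2]].
  apply Rabs_def1; lra.
Qed.
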